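(* Under the assumptions of the context, there is a neighborhood $V$ of $\bar\xi$ such that for each $\xi\in V$ one of the following holds: either \[ \bar\Delta(t,\xi)=|t-\nu_2(\xi)|^2\,(t-\nu_1(\xi))\quad\text{with }\nu_1(\xi)\in\mathbb R,\ \nu_1(\xi)\le0, \] or \[ \bar\Delta(t,\xi)=\prod_{k=1}^3(t-\nu_k(\xi))\quad\text{with all }\nu_k(\xi)\in\mathbb R,\ \nu_k(\xi)\le0 . \]
   Context: Let $a(t,\xi),b(t,\xi)$ be real-valued $C^\infty$ functions on $(-c,T)\times(\mathbb R^n\setminus\{0\})$, homogeneous of degree $0$ in $\xi$, with $\Delta:=4a^3-27b^2\ge0$ for $t\in[0,T)$. Let $|\bar\xi|=1$ with $a(0,\bar\xi)=0$, $\partial_ta(0,\bar\xi)\ne0$. Near $(0,\bar\xi)$ write $\Delta(t,\xi)=e_2(t,\xi)\bar\Delta(t,\xi)$ with $e_2>0$ smooth and $\bar\Delta(t,\xi)=t^3+a_1(\xi)t^2+a_2(\xi)t+a_3(\xi)$, $a_j$ smooth real-valued with $a_j(\bar\xi)=0$; $\nu_k(\xi)$ denote the roots in $t$ of $\bar\Delta(t,\xi)=0$. *)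

(* Defs.v *)
From HB Require Import structures.
From mathcomp Require Import all_boot all_order all_algebra.
From mathcomp Require Import all_classical all_reals all_analysis.
Set Implicit Arguments. Unset Strict Implicit. Unset Printing Implicit Defensive.
Import Order.TTheory GRing.Theory Num.Theory.
Import numFieldNormedType.Exports.
Local Open Scope classical_set_scope.
Local Open Scope ring_scope.

Section Smooth.
Variables (R : realType) (V : normedModType R).

Definition iter_dirs (dirs : seq V) (f : V -> R) : V -> R :=
  foldr (fun v g => derive g ^~ v) f dirs.

Definition smooth_on (U : set V) (f : V -> R) : Prop :=
  forall (dirs : seq V),
    (forall x v, U x -> derivable (iter_dirs dirs f) x v) /\
    (forall x, U x -> {for x, continuous (iter_dirs dirs f)}).
End Smooth.

Definition sqnorm (R : realType) (n : nat) (xi : 'rV[R]_n) : R :=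
  \sum_(i < n) xi ord0 i ^+ 2.

Definition cubic (R : realType) (a1 a2 a3 : R) (t : R) : R :=
  t ^+ 3 + a1 * t ^+ 2 + a2 * t + a3.

(* Main.v *)
Require Import Defs.
From HB Require Import structures.
From mathcomp Require Import all_boot all_order all_algebra.
From mathcomp Require Import all_classical all_reals all_analysis.
From mathcomp Require Import ring lra.
Import Order.TTheory GRing.Theory Num.Theory.
Import numFieldNormedType.Exports.
Local Open Scope classical_set_scope.
Local Open Scope ring_scope.

Definition goalP {R : realType} (f : R -> R) : Prop :=
  (exists nu1 x y : R, nu1 <= 0 /\
         forall t : R, f t = ((t - x) ^+ 2 + y ^+ 2) * (t - nu1))
  \/
  (exists nu1 nu2 nu3 : R, [/\ nu1 <= 0, nu2 <= 0 & nu3 <= 0] /\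
         forall t : R, f t = (t - nu1) * (t - nu2) * (t - nu3)).

Lemma sorted3 (R : realType) (d u1 u2 u3 : R) (f : R -> R) :
  u1 <= u2 -> u2 <= u3 -> u3 < d ->
  (forall t, f t = (t - u1) * (t - u2) * (t - u3)) ->
  (forall t, 0 <= t -> t < d -> 0 <= f t) -> goalP f.
Proof.
move=> h12 h23 h3d hf hpos.
have [u3le0|u3gt0] := lerP u3 0.
  right; exists u1, u2, u3; split => //; split; lra.
have [u23|u23] := ltrP u2 u3.
  exfalso.
  have [u2le0|u2gt0] := lerP u2 0.
    have := hpos (u3 / 2); rewrite hf.
    have h1 : 0 < (u3/2 - u1) * (u3/2 - u2) by apply: mulr_gt0; lra.
    have h2 : u3/2 - u3 < 0 by lra.
    move=> H; have : (u3 / 2 - u1) * (u3 / 2 - u2) * (u3 / 2 - u3) < 0.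
      by rewrite pmulr_rlt0.
    have: 0 <= (u3 / 2 - u1) * (u3 / 2 - u2) * (u3 / 2 - u3) by apply: H; lra.
    lra.
  have := hpos ((u2 + u3) / 2); rewrite hf.
  have h1 : 0 < ((u2 + u3)/2 - u1) * ((u2 + u3)/2 - u2) by apply: mulr_gt0; lra.
  have h2 : (u2 + u3)/2 - u3 < 0 by lra.
  move=> H; have : ((u2 + u3)/2 - u1) * ((u2 + u3)/2 - u2) * ((u2 + u3)/2 - u3) < 0.
    by rewrite pmulr_rlt0.
  have: 0 <= ((u2 + u3)/2 - u1) * ((u2 + u3)/2 - u2) * ((u2 + u3)/2 - u3) by apply: H; lra.
  lra.
have e23 : u2 = u3 by apply/eqP; rewrite eq_le h23 u23.
subst u2.
have [u1le0|u1gt0] := lerP u1 0.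
  left; exists u1, u3, 0; split => // t; rewrite hf; ring.
exfalso.
have := hpos 0 (lexx _) (lt_trans u3gt0 h3d); rewrite hf.
have : 0 < u1 * u3 * u3 by rewrite !mulr_gt0.
have -> : (0 - u1) * (0 - u3) * (0 - u3) = - (u1 * u3 * u3) by ring.
lra.
Qed.

Lemma three3 (R : realType) (d u1 u2 u3 : R) (f : R -> R) :
  u1 < d -> u2 < d -> u3 < d ->
  (forall t, f t = (t - u1) * (t - u2) * (t - u3)) ->
  (forall t, 0 <= t -> t < d -> 0 <= f t) -> goalP f.
Proof.
move=> h1 h2 h3 hf hp.
have [a12|a12] := lerP u1 u2; have [a23|a23] := lerP u2 u3;
  have [a13|a13] := lerP u1 u3.
- by apply: (@sorted3 R d u1 u2 u3).
- lra.
- apply: (@sorted3 R d u1 u3 u2) => //; try lra.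
  by move=> t; rewrite hf; ring.
- apply: (@sorted3 R d u3 u1 u2) => //; try lra.
  by move=> t; rewrite hf; ring.
- apply: (@sorted3 R d u2 u1 u3) => //; try lra.
  by move=> t; rewrite hf; ring.
- apply: (@sorted3 R d u2 u3 u1) => //; try lra.
  by move=> t; rewrite hf; ring.
- lra.
- apply: (@sorted3 R d u3 u2 u1) => //; try lra.
  by move=> t; rewrite hf; ring.
Qed.

Lemma cubic_root_bound (R : realType) (d a1 a2 a3 r : R) : 0 < d ->
  `|a1| < d / 3 -> `|a2| < d ^+ 2 / 3 -> `|a3| < d ^+ 3 / 3 ->
  cubic a1 a2 a3 r = 0 -> r < d.
Proof.
rewrite /cubic => d0 h1 h2 h3 hr.
rewrite ltNge; apply/negP => dr.
have r0 : 0 < r by apply: (lt_le_trans d0 dr).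
have n1 := ler_norm (- a1); have n2 := ler_norm (- a2).
have e3 := ler_norm (- a3); rewrite normrN in n1; rewrite normrN in n2; rewrite normrN in e3.
have r2 : 0 <= r ^+ 2 by apply: sqr_ge0.
have r0' : 0 <= r by apply: ltW.
have e1 : - (a1 * r ^+ 2) <= `|a1| * r ^+ 2.
  by rewrite -mulNr; apply: ler_wpM2r.
have e2 : - (a2 * r) <= `|a2| * r.
  by rewrite -mulNr; apply: ler_wpM2r.
have f1 : `|a1| * r ^+ 2 <= d / 3 * r ^+ 2 by apply: ler_wpM2r => //; apply: ltW.
have f2 : `|a2| * r <= d ^+ 2 / 3 * r by apply: ler_wpM2r => //; apply: ltW.
have g1 : d / 3 * r ^+ 2 <= r ^+ 3 / 3.
  have : d * r ^+ 2 <= r * r ^+ 2 by apply: ler_wpM2r.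
  rewrite -exprS => H; lra.
have g2 : d ^+ 2 / 3 * r <= r ^+ 3 / 3.
  have H : d ^+ 2 <= r ^+ 2 by rewrite lerXn2r // nnegrE ltW.
  have : d ^+ 2 * r <= r ^+ 2 * r by apply: ler_wpM2r.
  rewrite -exprSr => H'; lra.
have g3 : d ^+ 3 <= r ^+ 3 by rewrite lerXn2r // nnegrE ltW.
have r3 : 0 < r ^+ 3 by rewrite exprn_gt0.
lra.
Qed.

Lemma cubic_has_root (R : realType) (a1 a2 a3 : R) :
  exists r, cubic a1 a2 a3 r = 0.
Proof.
pose p : {poly R} := 'X^3 + a1%:P * 'X^2 + a2%:P * 'X + a3%:P.
have hp x : p.[x] = cubic a1 a2 a3 x.
  by rewrite /p /cubic !(hornerD, hornerM, hornerC, hornerXn, hornerX).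
pose M := 1 + `|a1| + `|a2| + `|a3|.
have n1 := ler_norm a1; have n2 := ler_norm a2; have n3 := ler_norm a3.
have m1 := ler_norm (- a1); have m2 := ler_norm (- a2); have m3 := ler_norm (- a3).
rewrite normrN in m1; rewrite normrN in m2; rewrite normrN in m3.
have a1p := normr_ge0 a1; have a2p := normr_ge0 a2; have a3p := normr_ge0 a3.
have M1 : 1 <= M by rewrite /M; lra.
have M2 : M <= M ^+ 2 by rewrite expr2 ler_peMl //; lra.
have M3 : M ^+ 3 = M ^+ 2 * (1 + `|a1| + `|a2| + `|a3|) by rewrite exprSr.
clearbody M.
have q1 : - (a1 * M ^+ 2) <= `|a1| * M ^+ 2 by rewrite -mulNr; apply: ler_wpM2r; [apply: sqr_ge0|].
have q1' : a1 * M ^+ 2 <= `|a1| * M ^+ 2 by apply: ler_wpM2r; [apply: sqr_ge0|].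
have q2 : - (a2 * M) <= `|a2| * M by rewrite -mulNr; apply: ler_wpM2r; lra.
have q2' : a2 * M <= `|a2| * M by apply: ler_wpM2r; lra.
have s2 : `|a2| * M <= `|a2| * M ^+ 2 by apply: ler_wpM2l.
have s3 : `|a3| <= `|a3| * M ^+ 2 by rewrite -{1}(mulr1 `|a3|); apply: ler_wpM2l; lra.
have := @poly_ivt R p (- M) M.
rewrite !hp /cubic.
case.
- lra.
- apply/andP; split.
  + have -> : (- M) ^+ 3 = - M ^+ 3 by rewrite exprNn /=; ring.
    have -> : (- M) ^+ 2 = M ^+ 2 by rewrite sqrrN.
    nra.
  + nra.
- move=> x _ /rootP; rewrite hp => hx; by exists x.
Qed.

Lemma cubic_main (R : realType) (d a1 a2 a3 : R) : 0 < d ->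
  `|a1| < d / 3 -> `|a2| < d ^+ 2 / 3 -> `|a3| < d ^+ 3 / 3 ->
  (forall t, 0 <= t -> t < d -> 0 <= cubic a1 a2 a3 t) ->
  goalP (cubic a1 a2 a3).
Proof.
move=> d0 h1 h2 h3 hpos.
have bnd := @cubic_root_bound R d a1 a2 a3 _ d0 h1 h2 h3.
have [r hr] := @cubic_has_root R a1 a2 a3.
pose p := a1 + r; pose q := a2 + r * p.
have fac t : cubic a1 a2 a3 t = (t - r) * (t ^+ 2 + p * t + q).
  move: hr; rewrite /cubic /q /p => hr.
  have -> : a3 = - (r ^+ 3 + a1 * r ^+ 2 + a2 * r) by rewrite -[LHS]subr0 -hr; ring.
  ring.
pose D := p ^+ 2 - 4 * q.
have [D0|D0] := lerP 0 D.
  pose s := Num.sqrt D.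
  have hs : s ^+ 2 = D by rewrite sqr_sqrtr.
  have fac2 t : cubic a1 a2 a3 t =
      (t - r) * (t - (- p - s) / 2) * (t - (- p + s) / 2).
    rewrite fac -mulrA; congr (_ * _).
    have -> : q = (p ^+ 2 - s ^+ 2) / 4 by rewrite hs /D; field.
    by field.
  apply: (@three3 R d r ((- p - s) / 2) ((- p + s) / 2) (cubic a1 a2 a3) _ _ _ fac2 hpos).
  - by apply: bnd.
  - by apply: bnd; rewrite fac2; ring.
  - by apply: bnd; rewrite fac2; ring.
left; exists r, (- p / 2), (Num.sqrt (- D) / 2); split.
  have q0 : 0 < q by have := sqr_ge0 p; rewrite /D in D0; lra.
  have := hpos 0 (lexx _) d0; rewrite fac.
  have -> : (0 - r) * (0 ^+ 2 + p * 0 + q) = - (r * q) by ring.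
  rewrite oppr_ge0 pmulr_lle0 //.
move=> t; rewrite fac mulrC; congr (_ * _).
have hs : Num.sqrt (- D) ^+ 2 = - D by rewrite sqr_sqrtr // oppr_ge0 ltW.
have -> : (t - - p / 2) ^+ 2 + (Num.sqrt (- D) / 2) ^+ 2
   = (t + p / 2) ^+ 2 + (Num.sqrt (- D)) ^+ 2 / 4 by field.
by rewrite hs /D; field.
Qed.

Theorem lemma4p3 (R : realType) (n : nat) (c T : R)
  (a b : R * 'rV[R]_n -> R) (xib : 'rV[R]_n)
  (e2 : R * 'rV[R]_n -> R) (a1 a2 a3 : 'rV[R]_n -> R)
  (W : set (R * 'rV[R]_n)) (U : set 'rV[R]_n) :
  0 < c -> 0 < T ->
  smooth_on [set p | - c < p.1 < T /\ p.2 != 0] a ->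
  smooth_on [set p | - c < p.1 < T /\ p.2 != 0] b ->
  (forall t xi (l : R), - c < t < T -> xi != 0 -> 0 < l ->
     a (t, l *: xi) = a (t, xi) /\ b (t, l *: xi) = b (t, xi)) ->
  (forall t xi, 0 <= t < T -> xi != 0 ->
     0 <= 4 * a (t, xi) ^+ 3 - 27 * b (t, xi) ^+ 2) ->
  sqnorm xib = 1 ->
  a (0, xib) = 0 ->
  derive1 (fun t => a (t, xib)) 0 != 0 ->
  open W -> W (0, xib) ->
  (forall p, W p -> - c < p.1 < T /\ p.2 != 0) ->
  open U -> U xib ->
  smooth_on W e2 ->
  smooth_on U a1 -> smooth_on U a2 -> smooth_on U a3 ->
  a1 xib = 0 -> a2 xib = 0 -> a3 xib = 0 ->
  (forall p, W p -> 0 < e2 p /\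
     4 * a p ^+ 3 - 27 * b p ^+ 2 = e2 p * cubic (a1 p.2) (a2 p.2) (a3 p.2) p.1) ->
  exists V : set 'rV[R]_n, nbhs xib V /\
    forall xi, V xi ->
      (exists nu1 x y : R, nu1 <= 0 /\
         forall t : R, cubic (a1 xi) (a2 xi) (a3 xi) t
                       = ((t - x) ^+ 2 + y ^+ 2) * (t - nu1))
      \/
      (exists nu1 nu2 nu3 : R, [/\ nu1 <= 0, nu2 <= 0 & nu3 <= 0] /\
         forall t : R, cubic (a1 xi) (a2 xi) (a3 xi) t
                       = (t - nu1) * (t - nu2) * (t - nu3)).
Proof.
move=> c0 T0 _ _ _ hD _ _ _ oW W0 hWdom _ Uxib _ s1 s2 s3 z1 z2 z3 hfac.
have hW : nbhs (0, xib) W by apply: open_nbhs_nbhs.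
case: hW => -[A B] /= [hA hB] hAB.
have [e e0 he] := nbhs_norm0P.1 hA.
have ct (f : 'rV[R]_n -> R) : smooth_on U f -> f xib = 0 ->
    f x @[x --> xib] --> 0.
  move=> sf fz; rewrite -fz; exact: ((sf [::]).2 xib Uxib).
have p1 : 0 < e / 3 by rewrite divr_gt0.
have p2 : 0 < e ^+ 2 / 3 by rewrite divr_gt0 // exprn_gt0.
have p3 : 0 < e ^+ 3 / 3 by rewrite divr_gt0 // exprn_gt0.
have h1 := cvgr_dist_lt a1 0 (ct _ s1 z1) _ p1.
have h2 := cvgr_dist_lt a2 0 (ct _ s2 z2) _ p2.
have h3 := cvgr_dist_lt a3 0 (ct _ s3 z3) _ p3.
exists [set xi | B xi /\ `|0 - a1 xi| < e / 3 /\ `|0 - a2 xi| < e ^+ 2 / 3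
   /\ `|0 - a3 xi| < e ^+ 3 / 3]; split.
  near=> xi; split; [|split; [|split]].
  - near: xi; exact: hB.
  - near: xi; exact: h1.
  - near: xi; exact: h2.
  - near: xi; exact: h3.
move=> xi /= [hBx [k1 [k2 k3]]].
rewrite sub0r normrN in k1; rewrite sub0r normrN in k2; rewrite sub0r normrN in k3.
apply: (@cubic_main R e) => // t t0 te.
have Wt : W (t, xi).
  apply: hAB; split => //=; apply: he => /=; rewrite ger0_norm //.
have [/andP [_ tT] xi0] := hWdom _ Wt.
have [epos heq] := hfac _ Wt.
have := hD t xi _ xi0; rewrite heq /= t0 tT => /(_ isT).
by rewrite pmulr_rge0.
Unshelve. all: by end_near.
Qed.
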